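(* For every integer $n\ge 0$ and every nonzero complex number $x$, \[ \sum_{j=0}^{n}L_{2(n-2j)}(x)=\sum_{j=0}^{n}\left(\frac{x^2+2}{2}\right)^jL_{2(n-j)}(x)=\frac{2}{x}F_{2(n+1)}(x). \]
   Context: The Fibonacci polynomials $F_n(x)$ and Lucas polynomials $L_n(x)$ are defined by $F_0(x)=0$, $F_1(x)=1$, $L_0(x)=2$, $L_1(x)=x$ and $G_{n+1}(x)=xG_n(x)+G_{n-1}(x)$; they are extended to negative indices by $F_{-n}(x)=(-1)^{n-1}F_n(x)$ and $L_{-n}(x)=(-1)^nL_n(x)$. *)

(* Defs.v *)
From HB Require Import structures.
From mathcomp Require Import all_boot all_order all_algebra.
From mathcomp Require Import complex.
From mathcomp Require Import Rstruct.
Set Implicit Arguments. Unset Strict Implicit. Unset Printing Implicit Defensive.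
Import Order.TTheory GRing.Theory Num.Theory.
Local Open Scope ring_scope.

Definition Cplx : fieldType := (Rdefinitions.R)[i].

Section FibLuc.
Variable K : comRingType.

(* Pair (G_n, G_{n+1}) of the sequence G_{n+1} = x G_n + G_{n-1}
   started from (G_0, G_1) = (a, b). *)
Fixpoint gpair (a b x : K) (n : nat) : K * K :=
  match n with
  | 0%N => (a, b)
  | k.+1 => let p := gpair a b x k in (p.2, x * p.2 + p.1)
  end.

Definition fibn (n : nat) (x : K) : K := (gpair 0 1 x n).1.
Definition lucn (n : nat) (x : K) : K := (gpair 2 x x n).1.

(* Extension to integer indices:
   F_{-m} = (-1)^(m-1) F_m,  L_{-m} = (-1)^m L_m.
   Negz k denotes -(k+1). *)
Definition fib (z : int) (x : K) : K :=
  match z with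
  | Posz n => fibn n x
  | Negz k => (-1) ^+ k * fibn k.+1 x
  end.
Definition luc (z : int) (x : K) : K :=
  match z with
  | Posz n => lucn n x
  | Negz k => (-1) ^+ k.+1 * lucn k.+1 x
  end.
End FibLuc.

(* Main.v *)
Require Import Defs.
From HB Require Import structures.
From mathcomp Require Import all_boot all_order all_algebra.
From mathcomp Require Import complex.
From mathcomp Require Import Rstruct.
From mathcomp Require Import ring zify.
Import Order.TTheory GRing.Theory Num.Theory.
Local Open Scope ring_scope.

Section G.
Variable K : comRingType.
Variable x : K.

Lemma gpS (a b : K) m : (gpair a b x m.+2).1 = x * (gpair a b x m.+1).1 + (gpair a b x m).1.
Proof. by []. Qed.

Lemma fibS m : fibn m.+2 x = x * fibn m.+1 x + fibn m x.
Proof. exact: gpS. Qed.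
Lemma lucS m : lucn m.+2 x = x * lucn m.+1 x + lucn m x.
Proof. exact: gpS. Qed.

Lemma luc_fib2 m : lucn m.+1 x = fibn m.+2 x + fibn m x /\ lucn m.+2 x = fibn m.+3 x + fibn m.+1 x.
Proof.
elim: m => [|m [IH1 IH2]].
  rewrite /lucn /fibn /=; split; ring.
split => //.
rewrite lucS IH2 IH1 (fibS m.+2) (fibS m); ring.
Qed.

Lemma xluc k : x * lucn k.+2 x = fibn k.+4 x - fibn k x.
Proof.
have [_ ->] := luc_fib2 k.
rewrite (fibS k.+2) (fibS k.+1) (fibS k) ; ring.
Qed.

Lemma xluc2 k : x * lucn (2 * k.+1) x = fibn (2 * k.+2) x - fibn (2 * k) x.
Proof.
have -> : (2 * k.+1 = (2*k).+2)%N by lia.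
have -> : (2 * k.+2 = (2*k).+4)%N by lia.
exact: xluc.
Qed.
End G.

Lemma luc_opp_even (K : comRingType) (x : K) m : luc (- (2 * m)%:Z) x = lucn (2 * m) x.
Proof.
case: m => [|m] //.
have -> : (2 * m.+1 = (2 * m).+1.+1)%N by lia.
rewrite -NegzE /= -signr_odd /= oddM /=; ring.
Qed.

Definition T (x : Cplx) n := \sum_(0 <= j < n.+1) luc (2 * (n%:Z - 2 * j%:Z)) x.
Definition U (x : Cplx) n := \sum_(0 <= j < n.+1) ((x ^+ 2 + 2) / 2) ^+ j * luc (2 * (n%:Z - j%:Z)) x.

Lemma Trec x n : T x n.+2 = T x n + 2 * lucn (2 * n.+2) x.
Proof.
rewrite /T big_nat_recr // big_nat_recl //.
have -> : (2 * (n.+2%:Z - 2 * n.+2%:Z)) = - (2 * n.+2)%:Z by lia.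
rewrite luc_opp_even.
have -> : (2 * (n.+2%:Z - 2 * 0%:Z)) = (2 * n.+2)%:Z by lia.
rewrite (eq_bigr (fun j => luc (2 * (n%:Z - 2 * j%:Z)) x)); last first.
  move=> i _; congr luc; lia.
change (luc (Posz (2 * n.+2)) x) with (lucn (2 * n.+2) x).
rewrite /= mulr2n; ring.
Qed.

Lemma xT x n : x * T x n = 2 * fibn (2 * n.+1) x.
Proof.
have : x * T x n = 2 * fibn (2 * n.+1) x /\ x * T x n.+1 = 2 * fibn (2 * n.+2) x.
  elim: n => [|n [IH1 IH2]].
    rewrite /T big_nat1 big_nat_recr // big_nat1.
    have -> : (2 * (1%:Z - 2 * 1%:Z)) = - (2 * 1)%:Z by lia.
    have -> : (2 * (1%:Z - 2 * 0%:Z)) = (2 * 1)%:Z by lia.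
    have -> : (2 * (0%:Z - 2 * 0%:Z)) = (2 * 0)%:Z by lia.
    rewrite luc_opp_even.
    change (luc (Posz (2 * 1)) x) with (lucn (2 * 1) x).
    change (luc (Posz (2 * 0)) x) with (lucn (2 * 0) x).
    rewrite /lucn /fibn /=; split; ring.
  split => //.
  rewrite Trec mulrDr IH1 mulrCA xluc2; ring.
by case.
Qed.

Lemma Urec x n : U x n.+1 = lucn (2 * n.+1) x + (x ^+ 2 + 2) / 2 * U x n.
Proof.
rewrite /U big_nat_recl // big_distrr.
have -> : (2 * (n.+1%:Z - 0%:Z)) = (2 * n.+1)%:Z by lia.
rewrite expr0 mul1r; congr (_ + _); apply: eq_bigr => i _.
rewrite exprS -mulrA; congr (_ * (_ * luc _ _)); lia.
Qed.

Lemma two_nz : (2 : Cplx) != 0.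
Proof. have := @pnatr_eq0 (Rdefinitions.R[i]) 2. simpl. move=> H. exact: (negbT H). Qed.

Lemma xU x n : x * U x n = 2 * fibn (2 * n.+1) x.
Proof.
elim: n => [|n IH].
  rewrite /U big_nat1 /= /lucn /fibn /=; ring.
rewrite Urec mulrDr xluc2 mulrCA IH.
have -> : (2 * n.+2 = (2 * n).+4)%N by lia.
have -> : (2 * n.+1 = (2 * n).+2)%N by lia.
rewrite (@fibS _ x (2*n).+2) (@fibS _ x (2*n)).
have h : (2 : Cplx) / 2 = 1 by rewrite divff // two_nz.
rewrite (@fibS _ x (2*n).+1) (@fibS _ x (2*n)).
by field.
Qed.

Theorem theorem10 (n : nat) (x : Cplx) (hx : x != 0) :
  (\sum_(0 <= j < n.+1) luc (2 * (n%:Z - 2 * j%:Z)) x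
     = \sum_(0 <= j < n.+1) ((x ^+ 2 + 2) / 2) ^+ j * luc (2 * (n%:Z - j%:Z)) x)
  /\
  (\sum_(0 <= j < n.+1) ((x ^+ 2 + 2) / 2) ^+ j * luc (2 * (n%:Z - j%:Z)) x
     = 2 / x * fib (2 * (n%:Z + 1)) x).
Proof.
have -> : (2 * (n%:Z + 1)) = (2 * n.+1)%:Z by lia.
rewrite /=.
have eT := xT x n; have eU := xU x n.
rewrite -/(T x n) -/(U x n).
have hU : U x n = 2 / x * fibn (2 * n.+1) x.
  apply: (mulfI hx); rewrite eU; field; exact: hx.
split => //.
rewrite hU; apply: (mulfI hx); rewrite eT; field; exact: hx.
Qed.
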